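(* Let $A\in\mathbb{R}^{n\times d}$ be any matrix and let $\alpha_t=t$ for $t\ge 1$. Consider the following two procedures. (Smooth Perceptron.) For $\mu>0$ and $\mathbf{v}\in\mathbb{R}^d$ let $\mathbf{q}_{\mu}(\mathbf{v})=\arg\min_{\mathbf{q}\in\Delta^n}\big[\mathbf{q}^{\top}A\mathbf{v}+\mu D_E(\mathbf{q},\tfrac{\mathbf{1}}{n})\big]$. Set $\theta_0=\tfrac23$, $\mu_0=4$, $\mathbf{v}_0=\tfrac{1}{n}A^{\top}\mathbf{1}$, $\mathbf{q}_0=\mathbf{q}_{\mu_0}(\mathbf{v}_0)$, and for $t=1,\dots,T-1$: $\mathbf{v}_t=(1-\theta_{t-1})(\mathbf{v}_{t-1}+\theta_{t-1}A^{\top}\mathbf{q}_{t-1})+\theta_{t-1}^2A^{\top}\mathbf{q}_{\mu_{t-1}}(\mathbf{v}_{t-1})$, $\mu_t=(1-\theta_{t-1})\mu_{t-1}$, $\mathbf{q}_t=(1-\theta_{t-1})\mathbf{q}_{t-1}+\theta_{t-1}\mathbf{q}_{\mu_t}(\mathbf{v}_t)$, $\theta_t=\tfrac{2}{t+3}$. (Game dynamics.) Let $g(\mathbf{w},\mathbf{p})=\mathbf{p}^{\top}A\mathbf{w}-\tfrac12\|\mathbf{w}\|_2^2$, $\mathbf{p}_0=\tfrac{\mathbf{1}}{n}$, and for $j\ge0$ let $h_j(\mathbf{w})=-g(\mathbf{w},\mathbf{p}_j)$ and $\ell_j(\mathbf{p})=g(\mathbf{w}_j,\mathbf{p})$. For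 $t=1,\dots,T$: $\mathbf{w}_t=\arg\min_{\mathbf{w}\in\mathbb{R}^d}\sum_{j=1}^{t-1}\alpha_jh_j(\mathbf{w})+\alpha_th_{t-1}(\mathbf{w})$, and then $\mathbf{p}_t=\arg\min_{\mathbf{p}\in\Delta^n}\tfrac14\sum_{s=1}^{t}\alpha_s\ell_s(\mathbf{p})+D_E(\mathbf{p},\tfrac{\mathbf{1}}{n})$. Let $\overline{\mathbf{w}}_T=\frac{\sum_{t=1}^T\alpha_t\mathbf{w}_t}{\sum_{t=1}^T\alpha_t}$. Then $\mathbf{v}_{T-1}=\overline{\mathbf{w}}_T$ and $\mathbf{q}_{T-1}=\frac{\sum_{t=1}^{T}\alpha_t\mathbf{p}_t}{\sum_{t=1}^{T}\alpha_t}$.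
   Context: $\Delta^n$ is the probability simplex in $\mathbb{R}^n$, $\mathbf{1}$ is the all-ones vector. $E(\mathbf{p})=\sum_i p_i\log p_i$ is the negative entropy and $D_E(\mathbf{p},\mathbf{q})=\sum_i p_i\log(p_i/q_i)$ its Bregman divergence on $\Delta^n$ (the KL divergence). *)

(* Defs.v *)
From HB Require Import structures.
From mathcomp Require Import all_boot all_order all_algebra.
From mathcomp Require Import all_classical all_reals all_analysis.
Set Implicit Arguments. Unset Strict Implicit. Unset Printing Implicit Defensive.
Import Order.TTheory GRing.Theory Num.Theory.
Local Open Scope ring_scope.

Section Defs.
Variable R : realType.

Definition simplex (n : nat) : set 'cV[R]_n :=
  fun q => (forall i, 0 <= q i ord0) /\ \sum_i q i ord0 = 1.

Definition unif (n : nat) : 'cV[R]_n := const_mx (n%:R^-1).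

(* KL divergence D_E(p,q) = sum_i p_i log(p_i/q_i)  (0 log 0 = 0 since ln 0 = 0) *)
Definition KL (n : nat) (p q : 'cV[R]_n) : R :=
  \sum_i p i ord0 * ln (p i ord0 / q i ord0).

Definition is_argmin (T : Type) (S : set T) (f : T -> R) (x : T) : Prop :=
  S x /\ forall y, S y -> f x <= f y.

Definition bil (n d : nat) (A : 'M[R]_(n, d)) (p : 'cV[R]_n) (w : 'cV[R]_d) : R :=
  (p^T *m A *m w) ord0 ord0.

Definition gpay (n d : nat) (A : 'M[R]_(n, d)) (w : 'cV[R]_d) (p : 'cV[R]_n) : R :=
  bil A p w - 2^-1 * \sum_i (w i ord0) ^+ 2.

Definition alpha (t : nat) : R := t%:R.
End Defs.

(* Main.v *)
Require Import Defs.
From HB Require Import structures.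
From mathcomp Require Import all_boot all_order all_algebra.
From mathcomp Require Import all_classical all_reals all_analysis.
From mathcomp Require Import ring lra.
Import Order.TTheory GRing.Theory Num.Theory.
Local Open Scope ring_scope.

Section Aux.
Variable R : realType.

Lemma ln_lt_sub1 (y : R) : 0 < y -> y != 1 -> ln y < y - 1.
Proof.
move=> y0 y1.
have h : ln y != 0 by rewrite ln_eq0.
have := expR_gt1Dx h; rewrite lnK ?posrE //; lra.
Qed.

Lemma tangent_lt (a m u : R) : 0 <= a -> 0 < m -> 0 < u -> a != m ->
  a * ln (m / u) + a - m < a * ln (a / u).
Proof.
move=> a0 m0 u0 am.
have [->|apos] := eqVneq a 0.
  by rewrite !mul0r add0r sub0r oppr_lt0.
have ap : 0 < a by rewrite lt_def apos a0.
rewrite !ln_div ?posrE //.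
have hma : m / a != 1.
  apply: contra am => /eqP h; apply/eqP.
  have : m / a * a = a by rewrite h mul1r.
  by rewrite divfK ?gt_eqF // => ->.
have := @ln_lt_sub1 (m / a) (divr_gt0 m0 ap) hma.
rewrite ln_div ?posrE // => H.
have H2 : a * (ln m - ln a) < a * (m / a - 1) by rewrite ltr_pM2l.
have E : a * (m / a - 1) = m - a by field; rewrite gt_eqF.
rewrite E in H2. lra.
Qed.

Lemma tangent_le (a m u : R) : 0 <= a -> 0 < m -> 0 < u ->
  a * ln (m / u) + a - m <= a * ln (a / u).
Proof.
move=> a0 m0 u0; have [->|am] := eqVneq a m; first by rewrite addrK.
exact/ltW/tangent_lt.
Qed.

Definition phi (u c t : R) := t * c + t * ln (t / u).

Lemma mid_le (u c a b : R) : 0 < u -> 0 <= a -> 0 <= b ->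
  2 * phi u c ((a + b) / 2) <= phi u c a + phi u c b.
Proof.
move=> u0 a0 b0; rewrite /phi.
have [ab0|abn] := eqVneq (a + b) 0.
  have -> : a = 0 by lra.
  have -> : b = 0 by lra.
  rewrite !(mul0r, add0r, addr0, mulr0); lra.
have zp : 0 < (a + b) / 2.
  have : 0 < a + b by rewrite lt_def abn addr_ge0.
  lra.
have h1 := @tangent_le a _ u a0 zp u0.
have h2 := @tangent_le b _ u b0 zp u0.
set L := ln ((a + b) / 2 / u) in h1 h2 *.
have -> : 2 * ((a + b) / 2 * c + (a + b) / 2 * L) = a * c + b * c + (a * L + a - (a+b)/2) + (b * L + b - (a+b)/2) by field.
lra.
Qed.

Lemma mid_lt (u c a b : R) : 0 < u -> 0 <= a -> 0 <= b -> a != b ->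
  2 * phi u c ((a + b) / 2) < phi u c a + phi u c b.
Proof.
move=> u0 a0 b0 ab; rewrite /phi.
have abn : a + b != 0.
  apply/negP => /eqP h; move: ab; have -> : a = 0 by lra.
  have -> : b = 0 by lra. by rewrite eqxx.
have zp : 0 < (a + b) / 2.
  have : 0 < a + b by rewrite lt_def abn addr_ge0.
  lra.
have az : a != (a + b) / 2.
  apply/negP => /eqP h; move: ab; have -> : b = a by lra. by rewrite eqxx.
have h1 := @tangent_lt a _ u a0 zp u0 az.
have h2 := @tangent_le b _ u b0 zp u0.
set L := ln ((a + b) / 2 / u) in h1 h2 *.
have -> : 2 * ((a + b) / 2 * c + (a + b) / 2 * L) = a * c + b * c + (a * L + a - (a+b)/2) + (b * L + b - (a+b)/2) by field.
lra.
Qed.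

Definition Fo (n d : nat) (A : 'M[R]_(n,d)) (x : 'cV[R]_d) (y : 'cV[R]_n) :=
  bil A y x + KL y (@unif R n).
Arguments Fo {n d}.

Lemma bilE1 n d (A : 'M[R]_(n,d)) y x : bil A y x = \sum_i y i 0 * (A *m x) i 0.
Proof. by rewrite /bil -mulmxA mxE; apply: eq_bigr => i _; rewrite mxE. Qed.

Lemma Fo_sum n d (A : 'M[R]_(n,d)) x y :
  Fo A x y = \sum_i phi (n%:R^-1) ((A *m x) i 0) (y i 0).
Proof.
rewrite /Fo bilE1 /KL -big_split; apply: eq_bigr => i _.
by rewrite /phi /unif [const_mx _ _ _]mxE. Qed.

Lemma argmin_uniq n d (A : 'M[R]_(n,d)) x y1 y2 : (0 < n)%N ->
  is_argmin (@simplex R n) (Fo A x) y1 -> is_argmin (@simplex R n) (Fo A x) y2 ->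
  y1 = y2.
Proof.
move=> n0 [s1 m1] [s2 m2].
have u0 : 0 < (n%:R : R)^-1 by rewrite invr_gt0 ltr0n.
case: (pselect (exists i, y1 i 0 != y2 i 0)) => [[i Hi]|H]; last first.
  apply/matrixP => k l; rewrite (ord1 l); apply/eqP/negP => /negP Hk.
  by apply: H; exists k.
exfalso.
set z := 2^-1 *: (y1 + y2).
have zE k : z k 0 = (y1 k 0 + y2 k 0) / 2 by rewrite !mxE mulrC.
have sz : simplex z.
  case: s1 => p1 e1; case: s2 => p2 e2; split.
    by move=> k; rewrite zE divr_ge0 ?addr_ge0.
  under eq_bigr do rewrite zE.
  by rewrite -mulr_suml big_split /= e1 e2; field.
have h1 := m1 _ sz; have h2 := m2 _ sz.
have : 2 * Fo A x z < Fo A x y1 + Fo A x y2.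
  rewrite !Fo_sum mulr_sumr -big_split /=.
  rewrite (bigD1 i) //= [X in _ < X](bigD1 i) //=.
  apply: ltr_leD.
    rewrite zE; apply: mid_lt => //; [exact: s1.1 | exact: s2.1].
  apply: ler_sum => k _; rewrite zE; apply: mid_le => //; [exact: s1.1 | exact: s2.1].
lra.
Qed.
End Aux.

Section Aux3.
Variable R : realType.

Lemma bilE2 n d (A : 'M[R]_(n,d)) y x : bil A y x = \sum_j (A^T *m y) j 0 * x j 0.
Proof.
rewrite /bil; have -> : y^T *m A = (A^T *m y)^T by rewrite trmx_mul trmxK.
by rewrite mxE; apply: eq_bigr => j _; rewrite mxE.
Qed.

Lemma bil_sumr n d (A : 'M[R]_(n,d)) y I (r : seq I) (P : pred I) (F : I -> 'cV[R]_d) :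
  bil A y (\sum_(i <- r | P i) F i) = \sum_(i <- r | P i) bil A y (F i).
Proof. by rewrite /bil mulmx_sumr summxE. Qed.

Lemma bil_scaler n d (A : 'M[R]_(n,d)) y a x : bil A y (a *: x) = a * bil A y x.
Proof. by rewrite /bil -scalemxAr mxE. Qed.

Lemma bil_suml n d (A : 'M[R]_(n,d)) x I (r : seq I) (P : pred I) (F : I -> 'cV[R]_n) :
  bil A (\sum_(i <- r | P i) F i) x = \sum_(i <- r | P i) bil A (F i) x.
Proof.
rewrite bilE2 mulmx_sumr.
under eq_bigr do rewrite summxE mulr_suml.
rewrite exchange_big /=; apply: eq_bigr => i _; by rewrite bilE2.
Qed.

Lemma bil_scalel n d (A : 'M[R]_(n,d)) a y x : bil A (a *: y) x = a * bil A y x.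
Proof. by rewrite !bilE2 -scalemxAr mulr_sumr; apply: eq_bigr => j _; rewrite mxE mulrA. Qed.

Lemma bil_addl n d (A : 'M[R]_(n,d)) y1 y2 x : bil A (y1 + y2) x = bil A y1 x + bil A y2 x.
Proof. by rewrite !bilE2 -big_split; apply: eq_bigr => j _; rewrite mulmxDr mxE mulrDl. Qed.

Lemma argmin_shift T (S : set T) (f g : T -> R) c y :
  is_argmin S f y -> (forall z, S z -> f z = g z + c) -> is_argmin S g y.
Proof.
move=> [Sy m] E; split => // z Sz; have := m z Sz; rewrite !E //; lra.
Qed.

Lemma argmin_scale T (S : set T) (f g : T -> R) a y : 0 < a ->
  is_argmin S f y -> (forall z, S z -> f z = a * g z) -> is_argmin S g y.
Proof.
move=> a0 [Sy m] E; split => // z Sz; have := m z Sz; rewrite !E //.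
by rewrite ler_pM2l.
Qed.

Lemma quad_uniq d (u : 'cV[R]_d) (s : R) (f : 'cV[R]_d -> R) y : 0 < s ->
  (forall x, f x = - \sum_i u i 0 * x i 0 + s * (2^-1 * \sum_i x i 0 ^+ 2)) ->
  is_argmin setT f y -> y = s^-1 *: u.
Proof.
move=> s0 fE [_ m].
set z := s^-1 *: u.
have := m z I.
have E : f y - f z = \sum_i s * 2^-1 * (y i 0 - z i 0) ^+ 2.
  rewrite !fE !mulr_sumr -!sumrN -!big_split /= -sumrB.
  apply: eq_bigr => i _; rewrite /z mxE; field; by rewrite gt_eqF.
have hs : 0 <= \sum_i s * 2^-1 * (y i 0 - z i 0) ^+ 2.
  by apply: sumr_ge0 => i _; rewrite mulr_ge0 ?sqr_ge0 // mulr_ge0 // ltW.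
move=> H.
have Z : \sum_i s * 2^-1 * (y i 0 - z i 0) ^+ 2 == 0.
  by rewrite eq_le hs andbT -E subr_le0.
move: Z; rewrite psumr_eq0; last by move=> i _; rewrite mulr_ge0 ?sqr_ge0 // mulr_ge0 // ltW.
move=> /allP Z; apply/matrixP => i j; rewrite (ord1 j).
have := Z i (mem_index_enum _); rewrite /= mulf_eq0 mulf_eq0 invr_eq0 gt_eqF // pnatr_eq0 /=.
by rewrite sqrf_eq0 subr_eq0 => /eqP.
Qed.
End Aux3.

Ltac nz := repeat (apply/andP; split); rewrite gt_eqF //; lra.

Theorem proposition1 (R : realType) (n d : nat) (A : 'M[R]_(n, d)) (T : nat)
  (* smoothed best response q_mu(v) *)
  (qmu : R -> 'cV[R]_d -> 'cV[R]_n)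
  (* Smooth Perceptron iterates *)
  (v : nat -> 'cV[R]_d) (mu : nat -> R) (q : nat -> 'cV[R]_n) (theta : nat -> R)
  (* game dynamics iterates *)
  (w : nat -> 'cV[R]_d) (p : nat -> 'cV[R]_n) :
  (0 < n)%N -> (1 <= T)%N ->
  (forall (m : R) (x : 'cV[R]_d), 0 < m ->
     is_argmin (@simplex R n)
       (fun y => bil A y x + m * KL y (@unif R n)) (qmu m x)) ->
  theta 0%N = 2 / 3 -> mu 0%N = 4 ->
  v 0%N = n%:R^-1 *: (A^T *m const_mx 1) ->
  q 0%N = qmu (mu 0%N) (v 0%N) ->
  (forall t : nat, (1 <= t <= T.-1)%N ->
     [/\ v t = (1 - theta t.-1) *: (v t.-1 + theta t.-1 *: (A^T *m q t.-1))
               + theta t.-1 ^+ 2 *: (A^T *m qmu (mu t.-1) (v t.-1)),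
         mu t = (1 - theta t.-1) * mu t.-1,
         q t = (1 - theta t.-1) *: q t.-1 + theta t.-1 *: qmu (mu t) (v t)
       & theta t = 2 / (t%:R + 3)]) ->
  p 0%N = @unif R n ->
  (forall t : nat, (1 <= t <= T)%N ->
     is_argmin [set: 'cV[R]_d]
       (fun x => \sum_(1 <= j < t) @alpha R j * (- gpay A x (p j))
                 + @alpha R t * (- gpay A x (p t.-1))) (w t)
     /\ is_argmin (@simplex R n)
       (fun y => 4^-1 * (\sum_(1 <= s < t.+1) @alpha R s * gpay A (w s) y)
                 + KL y (@unif R n)) (p t)) ->
  v T.-1 = (\sum_(1 <= t < T.+1) @alpha R t)^-1 *: \sum_(1 <= t < T.+1) @alpha R t *: w t
  /\ q T.-1 = (\sum_(1 <= t < T.+1) @alpha R t)^-1 *: \sum_(1 <= t < T.+1) @alpha R t *: p t.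
Proof.
move=> n0 T1 Hqmu th0 mu0 v0 q0 Hrec p0 Hgame.
pose S t := \sum_(1 <= s < t.+1) @alpha R s.
pose W t := \sum_(1 <= s < t.+1) @alpha R s *: w s.
pose P t := \sum_(1 <= s < t.+1) @alpha R s *: p s.
have SE t : S t = t%:R * (t%:R + 1) / 2.
  elim: t => [|t IH]; first by rewrite /S big_geq // mul0r mul0r.
  by rewrite /S big_nat_recr //= -/(S t) IH /alpha -natr1; field.
have Srec k : S k.+1 = S k + @alpha R k.+1 by rewrite /S big_nat_recr.
have Wrec k : W k.+1 = W k + @alpha R k.+1 *: w k.+1 by rewrite /W big_nat_recr.
have Prec k : P k.+1 = P k + @alpha R k.+1 *: p k.+1 by rewrite /P big_nat_recr.
have P0 : P 0%N = 0 by rewrite /P big_geq.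
have Spos k : 0 < S k.+1.
  rewrite SE; have := ler0n R k; rewrite -natr1 => h.
  apply: divr_gt0; last by [].
  by apply: mulr_gt0; lra.
have Hw k : (1 <= k <= T)%N ->
    w k = (S k)^-1 *: (A^T *m (P k.-1 + @alpha R k *: p k.-1)).
  case: k => [//|k] /andP [_ tT].
  have [Hw1 _] := Hgame k.+1 (andb_true_intro (conj isT tT)).
  rewrite [k.+1.-1]/=.
  apply: (@quad_uniq R _ _ _ _ _ (Spos k) _ Hw1) => x.
  rewrite -bilE2 bil_addl bil_suml bil_scalel /= Srec /S.
  rewrite /gpay.
  set h := 2^-1 * _.
  rewrite (eq_bigr (fun j => @alpha R j * h - @alpha R j * bil A (p j) x)); last first.
    by move=> j _; ring.
  rewrite [X in _ = - (X + _) + _](eq_bigr (fun j => @alpha R j * bil A (p j) x)); last first.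
    by move=> j _; rewrite bil_scalel.
  rewrite sumrB -mulr_suml; ring.
have Hp k : (1 <= k <= T)%N -> is_argmin (@simplex R n) (Fo R n d A (4^-1 *: W k)) (p k).
  move=> tT; have [_ Hp1] := Hgame k tT.
  apply: (@argmin_shift R _ _ _ _ (- (4^-1 * \sum_(1 <= s < k.+1) @alpha R s * (2^-1 * \sum_i w s i 0 ^+ 2))) _ Hp1) => z _.
  rewrite /Fo bil_scaler bil_sumr /gpay.
  under eq_bigr do rewrite mulrBr.
  under [X in _ = _ * X + _ + _]eq_bigr do rewrite bil_scaler.
  rewrite sumrB; ring.
have Hq m x : 0 < m -> is_argmin (@simplex R n) (Fo R n d A (m^-1 *: x)) (qmu m x).
  move=> m0; apply: (@argmin_scale R _ _ _ _ _ _ m0 (Hqmu m x m0)) => z _.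
  rewrite /Fo bil_scaler mulrDr mulrA mulfV ?mul1r // gt_eqF //.
have Hth k : (k <= T.-1)%N -> theta k = 2 / (k%:R + 3).
  case: k => [_|k kT]; first by rewrite th0 add0r.
  by have [_ _ _ ->] := Hrec k.+1 (andb_true_intro (conj isT kT)).
have main k : (k < T)%N ->
    [/\ v k = (S k.+1)^-1 *: W k.+1, q k = (S k.+1)^-1 *: P k.+1 & mu k = 4 / S k.+1].
  elim: k => [_|k IH kT].
    have S1 : S 1%N = 1 by rewrite /S big_nat1.
    have W1 : W 1%N = w 1%N by rewrite /W big_nat1 /alpha scale1r.
    have P1 : P 1%N = p 1%N by rewrite /P big_nat1 /alpha scale1r.
    have w1 : w 1%N = A^T *m @unif R n.
      by rewrite (Hw 1%N) ?T1 //= P0 add0r S1 invr1 scale1r /alpha scale1r p0.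
    have ev0 : v 0%N = W 1%N.
      rewrite v0 W1 w1 scalemxAr; congr (A^T *m _).
      by apply/matrixP => i j; rewrite !mxE mulr1.
    have m0 : 0 < mu 0%N by rewrite mu0.
    have ex0 : (mu 0%N)^-1 *: v 0%N = 4^-1 *: W 1%N by rewrite mu0 ev0.
    have := Hq _ (v 0%N) m0; rewrite ex0 => Hq0.
    have E := @argmin_uniq R n d A _ _ _ n0 Hq0 (Hp 1%N (andb_true_intro (conj isT T1))).
    split.
    - by rewrite ev0 S1 invr1 scale1r.
    - by rewrite q0 E S1 invr1 scale1r P1.
    - by rewrite mu0 S1 divr1.
  have [ev ek em] := IH (ltnW kT).
  have kT' : (1 <= k.+1 <= T.-1)%N by rewrite /= -ltnS (ltn_predK kT).
  have [Ev Emu Eq _] := Hrec k.+1 kT'.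
  rewrite /= in Ev Emu Eq.
  have th : theta k = 2 / (k%:R + 3).
    by apply: Hth; rewrite -ltnS (ltn_predK kT); exact: ltnW.
  have hk := ler0n R k.
  have mpos : 0 < mu k by rewrite em divr_gt0.
  have qk1 : qmu (mu k) (v k) = p k.+1.
    have ex : (mu k)^-1 *: v k = 4^-1 *: W k.+1.
      rewrite em ev scalerA; congr (_ *: _).
      have := Spos k => Sp; field; rewrite gt_eqF //.
    have := Hq _ (v k) mpos; rewrite ex => Hq0.
    exact: (@argmin_uniq R n d A _ _ _ n0 Hq0 (Hp k.+1 (andb_true_intro (conj isT (ltnW kT))))).
  have Emu' : mu k.+1 = 4 / S k.+2.
    rewrite Emu em th !SE -!natr1; field; nz.
  have Em1pos : 0 < mu k.+1 by rewrite Emu' divr_gt0.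
  have ev' : v k.+1 = (S k.+2)^-1 *: W k.+2.
    rewrite Ev qk1 ev ek (Wrec k.+1) (Hw k.+2 kT) /= !mulmxDr -!scalemxAr.
    move: (A^T *m P k.+1) (A^T *m p k.+1) (W k.+1) => X Y Z.
    apply/matrixP => i j; rewrite !mxE !SE th /alpha -!natr1; field; nz.
  have qk2 : qmu (mu k.+1) (v k.+1) = p k.+2.
    have ex : (mu k.+1)^-1 *: v k.+1 = 4^-1 *: W k.+2.
      rewrite Emu' ev' scalerA; congr (_ *: _).
      have := Spos k.+1 => Sp; field; rewrite gt_eqF //.
    have := Hq _ (v k.+1) Em1pos; rewrite ex => Hq0.
    exact: (@argmin_uniq R n d A _ _ _ n0 Hq0 (Hp k.+2 (andb_true_intro (conj isT kT)))).
  split => //.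
  rewrite Eq qk2 ek th (Prec k.+1).
  move: (P k.+1) (p k.+2) => X Y.
  apply/matrixP => i j; rewrite !mxE !SE /alpha -!natr1; field; nz.
have [ev eq' _] : [/\ v T.-1 = (S T.-1.+1)^-1 *: W T.-1.+1, q T.-1 = (S T.-1.+1)^-1 *: P T.-1.+1 & mu T.-1 = 4 / S T.-1.+1].
  by apply: main; rewrite ltn_predL.
rewrite (prednK T1) in ev eq'.
by split; [exact: ev | exact: eq'].
Qed.
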